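(* Let $F$ be a finite hypergraph on vertex set $V$ all of whose edges have size $2$ or $3$. Let $(\gamma_v)_{v\in V}$ be independent $\{0,1\}$-valued random variables with $\Pr[\gamma_v=1]\le\rho$ for all $v$, where $0\le\rho\le 1/6$. For a set $S\subseteq V$ write $\gamma_S\neq 1$ for the event that $\gamma_s=0$ for some $s\in S$. For a vertex $x$ let $q_x=\Pr\big[\bigcap_{e\in F:\,x\in e}\{\gamma_{e\setminus\{x\}}\neq 1\}\big]$. Then for any vertices $x,y,z$ with $y\neq x$ and $z\neq x$, \[ \Pr\Big[\bigcap_{e\in F:\,x\in e,\,y\notin e}\{\gamma_{e\setminus\{x\}}\neq 1\}\Big]\le\Pr\Big[\bigcap_{e\in F:\,x\in e,\,y,z\notin e}\{\gamma_{e\setminus\{x\}}\neq 1\}\Big]\le q_x(1+3\rho). \] *)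

(* Defs.v *)
From HB Require Import structures.
From mathcomp Require Import all_boot all_order all_algebra.
Set Implicit Arguments. Unset Strict Implicit. Unset Printing Implicit Defensive.
Import Order.TTheory GRing.Theory Num.Theory.
Local Open Scope ring_scope.

(* Weight of an outcome gamma : {ffun V -> bool} under the product measure of
   independent Bernoulli variables with Pr[gamma_v = 1] = p v. *)
Definition bern_weight (R : realFieldType) (V : finType) (p : V -> R)
  (g : {ffun V -> bool}) : R :=
  \prod_(v : V) (if g v then p v else 1 - p v).

Definition Prob (R : realFieldType) (V : finType) (p : V -> R)
  (A : pred {ffun V -> bool}) : R :=
  \sum_(g : {ffun V -> bool} | A g) bern_weight p g.

Definition not_all_one (V : finType) (S : {set V}) (g : {ffun V -> bool}) : bool :=
  [exists s in S, ~~ g s].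

Definition link_event (V : finType) (F : {set {set V}}) (x : V)
  (P : pred {set V}) : pred {ffun V -> bool} :=
  fun g => [forall e in F, ((x \in e) && P e) ==> not_all_one (e :\ x) g].

Definition q_x (R : realFieldType) (V : finType) (p : V -> R)
  (F : {set {set V}}) (x : V) : R :=
  Prob p (link_event F x predT).

(* Main.v *)
Require Import Defs.
From HB Require Import structures.
From mathcomp Require Import all_boot all_order all_algebra.
From mathcomp Require Import ring lra.
Set Implicit Arguments. Unset Strict Implicit. Unset Printing Implicit Defensive.
Import Order.TTheory GRing.Theory Num.Theory.
Local Open Scope ring_scope.

Definition tog (V : finType) (v : V) (g : {ffun V -> bool}) : {ffun V -> bool} :=
  [ffun u => if u == v then ~~ g v else g u].

Lemma togK (V : finType) (v : V) : involutive (tog v).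
Proof.
move=> g; apply/ffunP=> u; rewrite !ffunE eqxx.
by case: eqP => [->|]; rewrite ?negbK.
Qed.

Lemma prob_split (R : realFieldType) (V : finType) (p : V -> R) (A : pred {ffun V -> bool}) v :
  Prob p A = Prob p (fun g => A g && ~~ g v) + Prob p (fun g => A g && g v).
Proof.
rewrite /Prob (bigID (fun g : {ffun V -> bool} => ~~ g v)) /=; congr (_ + _).
by apply: eq_bigl => g; rewrite negbK.
Qed.

Lemma prob_flip (R : realFieldType) (V : finType) (p : V -> R) (A : pred {ffun V -> bool}) v :
  (forall g, A (tog v g) = A g) ->
  Prob p (fun g => A g && ~~ g v) = (1 - p v) * Prob p A.
Proof.
move=> hA.
pose W := fun g : {ffun V -> bool} => \prod_(u | u != v) (if g u then p u else 1 - p u).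
have hw g : bern_weight p g = (if g v then p v else 1 - p v) * W g.
  by rewrite /bern_weight (bigD1 v).
have hW g : W (tog v g) = W g.
  by apply: eq_bigr => u /negPf uv; rewrite ffunE uv.
have e1 : Prob p (fun g => A g && ~~ g v) = (1 - p v) * \sum_(g | A g && ~~ g v) W g.
  rewrite /Prob mulr_sumr; apply: eq_bigr => g /andP[_ /negPf gv].
  by rewrite hw gv.
have e2 : Prob p (fun g => A g && g v) = p v * \sum_(g | A g && ~~ g v) W g.
  rewrite /Prob mulr_sumr (reindex_inj (inv_inj (togK v))) /=.
  apply: eq_big => g; first by rewrite hA ffunE eqxx.
  by move=> /andP[_]; rewrite hw hW !ffunE eqxx; case: (g v).
rewrite [Prob p A](prob_split p A v) e1 e2; ring.
Qed.

Lemma weight_ge0 (R : realFieldType) (V : finType) (p : V -> R) g :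
  (forall v, 0 <= p v) -> (forall v, p v <= 1) -> 0 <= bern_weight p g.
Proof.
move=> h0 h1; apply: prodr_ge0 => v _; case: (g v) => //.
by rewrite subr_ge0.
Qed.

Lemma prob_ge0 (R : realFieldType) (V : finType) (p : V -> R) A :
  (forall v, 0 <= p v) -> (forall v, p v <= 1) -> 0 <= Prob p A.
Proof. by move=> h0 h1; apply: sumr_ge0 => g _; apply: weight_ge0. Qed.

Lemma prob_mono (R : realFieldType) (V : finType) (p : V -> R) (A B : pred {ffun V -> bool}) :
  (forall v, 0 <= p v) -> (forall v, p v <= 1) ->
  (forall g, A g -> B g) -> Prob p A <= Prob p B.
Proof.
move=> h0 h1 hAB; rewrite [Prob p B]/Prob (bigID A) /=.
have -> : \sum_(i | B i && A i) bern_weight p i = Prob p A.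
  by apply: eq_bigl => g; case hg: (A g); rewrite ?andbT ?andbF ?(hAB _ hg).
rewrite lerDl; apply: sumr_ge0 => g _; exact: weight_ge0.
Qed.

Lemma link_tog (V : finType) (F : {set {set V}}) x (P : pred {set V}) v g :
  (forall e, P e -> v \notin e) ->
  link_event F x P (tog v g) = link_event F x P g.
Proof.
move=> hP; rewrite /link_event; apply: eq_forallb => e.
case hPe: (P e); rewrite ?andbF //= ; congr (_ ==> _).
rewrite /not_all_one andbT; congr (_ ==> _); apply: eq_existsb => s.
case hs: (s \in e :\ x) => //=.
rewrite ffunE; case: eqP => // sv.
by move: hs; rewrite sv in_setD1 (negPf (hP _ hPe)) andbF.
Qed.

Theorem mainTheorem9 (R : realFieldType) (V : finType) (F : {set {set V}})
  (p : V -> R) (rho : R)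
  (hF : forall e, e \in F -> (#|e| == 2)%N || (#|e| == 3)%N)
  (hrho0 : 0 <= rho) (hrho1 : rho <= 1 / 6)
  (hp0 : forall v, 0 <= p v) (hp : forall v, p v <= rho)
  (x y z : V) (hyx : y != x) (hzx : z != x) :
  Prob p (link_event F x (fun e => y \notin e))
    <= Prob p (link_event F x (fun e => (y \notin e) && (z \notin e)))
  /\ Prob p (link_event F x (fun e => (y \notin e) && (z \notin e)))
    <= q_x p F x * (1 + 3 * rho).
Proof.
have hp1 v : p v <= 1 by apply: le_trans (hp v) _; lra.
split.
  apply: prob_mono => // g; rewrite /link_event => /forallP H.
  apply/forallP => e; apply/implyP => eF; apply/implyP => /andP[xe /andP[ye _]].
  by move/implyP: (H e) => /(_ eF) /implyP; apply; rewrite xe.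
set B := link_event F x _.
set PB := Prob p B.
have PB0 : 0 <= PB by apply: prob_ge0.
have hBy g : B (tog y g) = B g by apply: link_tog => e /andP[].
have hBz g : B (tog z g) = B g by apply: link_tog => e /andP[].
pose D := fun g : {ffun V -> bool} => B g && ~~ g y && ~~ g z.
have hDq : Prob p D <= q_x p F x.
  apply: prob_mono => // g; rewrite /D => /andP[/andP[/forallP H gy] gz].
  apply/forallP => e; apply/implyP => eF; apply/implyP => /andP[xe _].
  case ye: (y \in e).
    by apply/existsP; exists y; rewrite in_setD1 hyx ye gy.
  case ze: (z \in e).
    by apply/existsP; exists z; rewrite in_setD1 hzx ze gz.
  by move/implyP: (H e) => /(_ eF) /implyP; apply; rewrite xe ye ze.
have hc : exists c, Prob p D = c * PB /\ 1 - 2 * rho <= c.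
  have ey : Prob p (fun g => B g && ~~ g y) = (1 - p y) * PB by apply: prob_flip.
  case: (eqVneq y z) => [eyz|nyz].
    exists (1 - p y); split.
      rewrite -ey /Prob; apply: eq_bigl => g; rewrite /D -eyz; by case: (g y); rewrite ?andbF ?andbT.
    have := hp y; have := hp0 y; lra.
  exists ((1 - p z) * (1 - p y)); split.
    rewrite -mulrA -ey /D; apply: prob_flip => g; rewrite hBz ffunE.
    by case: eqP => // eyz; move: nyz; rewrite eyz eqxx.
  have hm : 0 <= p z * p y by apply: mulr_ge0.
  have -> : (1 - p z) * (1 - p y) = 1 - p z - p y + p z * p y by ring.
  have := hp y; have := hp z; lra.
case: hc => c [hDc hc].
have h1 : 1 <= c * (1 + 3 * rho).
  have h2 : (1 - 2 * rho) * (1 + 3 * rho) <= c * (1 + 3 * rho) by apply: ler_wpM2r => //; lra.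
  have h3 : 0 <= rho * (1 - 6 * rho) by apply: mulr_ge0 => //; lra.
  have h4 : (1 - 2 * rho) * (1 + 3 * rho) = 1 + rho * (1 - 6 * rho) by ring.
  lra.
apply: le_trans (_ : PB * (c * (1 + 3 * rho)) <= _).
  by rewrite -{1}(mulr1 PB) ler_wpM2l.
rewrite mulrA [PB * c]mulrC -hDc; apply: ler_wpM2r => //; lra.
Qed.
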